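(* Let $(\pi_\rho,V_\rho)$ be an irreducible unitary representation of $Spin(n)$ and $V_\rho\otimes\mathbf{R}^n=\bigoplus_{k=0}^N V_{\lambda_k}$ its orthogonal decomposition into irreducible submodules. For all $u,v\in\mathbf{R}^n$, $$\sum_{k=0}^N m(\lambda_k)\,\big(p^\rho_{\lambda_k}(u)\big)^\ast p^\rho_{\lambda_k}(v)=-\frac14\,\pi_\rho([u,v]).$$
   Context: $Cl_n$ is the real Clifford algebra of $\mathbf{R}^n$ with $xy+yx=-2\langle x,y\rangle$; $\mathfrak{spin}(n)=\mathrm{span}\{[e_k,e_l]\}\subset Cl_n$ ($[a,b]=ab-ba$), $Spin(n)=\exp\mathfrak{spin}(n)$, $\pi_{\mathrm{Ad}}(g)x=gxg^{-1}$. $\pi_\rho$ also denotes the infinitesimal representation. $V_\rho\otimes\mathbf{R}^n$ carries $\pi_\rho\otimes\pi_{\mathrm{Ad}}$ and the tensor inner product; its irreducible constituents have multiplicity one and are mutually orthogonal; $\Pi^\rho_{\lambda_k}$ is the orthogonal projection onto $V_{\lambda_k}$, the Clifford homomorphism is $p^\rho_{\lambda_k}(u)\phi:=\Pi^\rho_{\lambda_k}(\phi\otimes u)$, and $^\ast$ denotes the adjoint. The conformal weight $m(\lambda_k)$ is the scalar by which $\widehat C=\frac1{32}\sum_{i,j}\pi_\rho([e_i,e_j])\otimes\pi_{\mathrm{Ad}}([e_i,e_j])$ acts on $V_{\lambda_k}$, equivalently $m(\lambda_k)=\frac12(n-\|\delta+\lambda_k\|^2+\|\delta+\rho\|^2-1)$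 with $\delta$ half the sum of positive roots. *)

(* Defs.v *)
From HB Require Import structures.
From mathcomp Require Import all_boot all_order all_algebra.
From mathcomp Require Import complex mxtens.
Set Implicit Arguments. Unset Strict Implicit. Unset Printing Implicit Defensive.
Import Order.TTheory GRing.Theory Num.Theory.
Local Open Scope ring_scope.

(** * The real Clifford algebra Cl_n of R^n with x y + y x = -2 <x,y>,
      realised on the basis e_A (A a subset of {0..n-1}, e_A = e_a1 ... e_ak
      with a1 < ... < ak). *)
Section Clifford.
Variables (R : rcfType) (n : nat).

Definition Cl := {ffun {set 'I_n} -> R}.

Definition symdiff (A B : {set 'I_n}) : {set 'I_n} := (A :\: B) :|: (B :\: A).

(* e_A e_B = clsign A B * e_(A symdiff B): reorder (inversions) and use e_i^2 = -1 *)
Definition clsign (A B : {set 'I_n}) : R :=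
  (-1) ^+ (#|[set p : 'I_n * 'I_n | [&& p.1 \in A, p.2 \in B & (p.2 < p.1)%N]]|
           + #|A :&: B|).

Definition clmul (x y : Cl) : Cl :=
  [ffun S => \sum_(A : {set 'I_n}) \sum_(B : {set 'I_n} | symdiff A B == S)
                clsign A B * x A * y B].

Definition clcomm (x y : Cl) : Cl := clmul x y - clmul y x.

Definition clscale (a : R) (x : Cl) : Cl := [ffun A => a * x A].

Definition clvec (u : 'cV[R]_n) : Cl :=
  [ffun A => \sum_(i < n) (A == [set i])%:R * u i 0].

Definition cle (i : 'I_n) : Cl := clvec (delta_mx i 0).

Definition spin_gen (i j : 'I_n) : Cl := clcomm (cle i) (cle j).

Definition in_spin (x : Cl) : Prop :=
  exists c : 'I_n -> 'I_n -> R,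
    x = \sum_(i < n) \sum_(j < n) clscale (c i j) (spin_gen i j).

(* infinitesimal adjoint representation on R^n: x |-> X x - x X,
   as an n x n matrix acting on column vectors *)
Definition piAd (X : Cl) : 'M[R]_n := \matrix_(i, j) (clcomm X (cle j)) [set i].

End Clifford.

(** * Representations on V = C^d (standard Hermitian inner product),
      V (x) R^n = C^(d*n) via the Kronecker product [*t] (tensor inner product). *)
Section Rep.
Local Open Scope complex_scope.
Variables (R : rcfType) (n d : nat).
Local Notation C := R[i].

Definition cmx p q (A : 'M[R]_(p, q)) : 'M[C]_(p, q) := map_mx (fun x => x%:C) A.

Definition adjmx p q (A : 'M[C]_(p, q)) : 'M[C]_(q, p) := map_mx conjc A^T.

Definition spin_rep (pi : Cl R n -> 'M[C]_d) : Prop :=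
  (forall (a : R) x y, in_spin x -> in_spin y ->
      pi (clscale a x + y) = a%:C *: pi x + pi y) /\
  (forall x y, in_spin x -> in_spin y ->
      pi (clcomm x y) = pi x *m pi y - pi y *m pi x).

(* unitary: pi(X) is skew-adjoint *)
Definition unitary_rep (pi : Cl R n -> 'M[C]_d) : Prop :=
  forall x, in_spin x -> adjmx (pi x) = - pi x.

(* irreducible: V <> 0 and no proper nonzero invariant subspace
   (subspaces given as row spaces of matrices whose rows are the vectors) *)
Definition irreducible_rep (pi : Cl R n -> 'M[C]_d) : Prop :=
  (0 < d)%N /\
  forall U : 'M[C]_d, (forall x, in_spin x -> (U *m (pi x)^T <= U)%MS) ->
    (U == (0 : 'M[C]_d))%MS \/ (U == 1%:M)%MS.

(* pi_rho (x) pi_Ad, infinitesimally *)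
Definition tens_rep (pi : Cl R n -> 'M[C]_d) (X : Cl R n) : 'M[C]_(d * n) :=
  pi X *t (1%:M : 'M[C]_n) + (1%:M : 'M[C]_d) *t cmx (piAd X).

Definition Chat (pi : Cl R n -> 'M[C]_d) : 'M[C]_(d * n) :=
  (32%:R)^-1 *: \sum_(i < n) \sum_(j < n)
     pi (spin_gen R i j) *t cmx (piAd (spin_gen R i j)).

(* phi |-> phi (x) u, as a (d*n) x d matrix *)
Definition tens_vec (u : 'cV[R]_n) : 'M[C]_(d * n, d) :=
  castmx (erefl (d * n)%N, muln1 d) ((1%:M : 'M[C]_d) *t cmx u).

(* Clifford homomorphism p(u) phi = Pi (phi (x) u) *)
Definition clifford_hom (Pi : 'M[C]_(d * n)) (u : 'cV[R]_n) : 'M[C]_(d * n, d) :=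
  Pi *m tens_vec u.

End Rep.

(* Main.v *)
Require Import Defs.
From HB Require Import structures.
From mathcomp Require Import all_boot all_order all_algebra.
From mathcomp Require Import complex mxtens.
From mathcomp Require Import ring.
Import GRing.Theory Num.Theory.
Local Open Scope ring_scope.

Lemma card_pairs (n : nat) (A B : {set 'I_n}) (r : 'I_n -> 'I_n -> bool) :
  #|[set p : 'I_n * 'I_n | [&& p.1 \in A, p.2 \in B & r p.1 p.2]]|
  = (\sum_(a in A) \sum_(b in B) r a b)%N.
Proof.
transitivity (\sum_a \sum_b ([&& a \in A, b \in B & r a b] : nat))%N; last first.
  rewrite [RHS]big_mkcond /=; apply: eq_bigr => a _.
  case: (boolP (a \in A)) => aA.
    rewrite [RHS]big_mkcond /=; by apply: eq_bigr => b _; case: (b \in B).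
  by apply: big1 => b _.
rewrite pair_bigA /= -sum1_card big_mkcond /=; apply: eq_bigr => p _.
by rewrite inE; case: ifP.
Qed.

Lemma sum_eq_in (n : nat) (B : {set 'I_n}) (a : 'I_n) :
  (\sum_(b in B) (a == b) = (a \in B))%N.
Proof.
case: (boolP (a \in B)) => aB.
  rewrite (bigD1 a) //= eqxx big1 // => b /andP[_ ba]; by rewrite eq_sym (negbTE ba).
by apply: big1 => b bB; case: eqP => // ab; rewrite ab bB in aB.
Qed.

Lemma card_capE (n : nat) (A B : {set 'I_n}) :
  #|A :&: B| = (\sum_(a in A) \sum_(b in B) (a == b))%N.
Proof.
rewrite -sum1_card big_mkcond /= [RHS]big_mkcond /=; apply: eq_bigr => a _.
rewrite inE sum_eq_in; by case: (a \in A); case: (a \in B).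
Qed.

Lemma clsignE (R : rcfType) (n : nat) (A B : {set 'I_n}) :
  clsign R A B = (-1) ^+ (\sum_(a in A) \sum_(b in B) ((b < a) + (a == b)))%N.
Proof.
rewrite /clsign (@card_pairs _ A B (fun a b => (b < a)%N)) card_capE -big_split /=; congr (_ ^+ _).
by apply: eq_bigr => a _; rewrite -big_split.
Qed.
Definition bs (R : rcfType) (n : nat) (a : R) (D : {set 'I_n}) : Cl R n :=
  [ffun S => a * (D == S)%:R].
Arguments bs {R n}.

Lemma sum_delta (R : rcfType) (T : finType) (X : T) (F : T -> R) :
  \sum_A (A == X)%:R * F A = F X.
Proof.
rewrite (bigD1 X) //= eqxx mul1r big1 ?addr0 // => A /negbTE ->; by rewrite mul0r.
Qed.

Lemma clmulE (R : rcfType) (n : nat) (x y : Cl R n) S :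
  clmul x y S = \sum_A \sum_B clsign R A B * x A * y B * (symdiff A B == S)%:R.
Proof.
rewrite /clmul ffunE; apply: eq_bigr => A _; rewrite big_mkcond /=.
by apply: eq_bigr => B _; case: eqP; rewrite ?mulr1 ?mulr0.
Qed.

Lemma clmul_bs (R : rcfType) (n : nat) (a b : R) (A B : {set 'I_n}) :
  clmul (bs a A) (bs b B) = bs (a * b * clsign R A B) (symdiff A B).
Proof.
apply/ffunP => S; rewrite clmulE ffunE.
rewrite (bigD1 A) //= [X in _ + X]big1 => [|A' nA]; last first.
  apply: big1 => B' _; rewrite !ffunE eq_sym (negbTE nA); by rewrite !(mulr0, mul0r).
rewrite addr0 (bigD1 B) //= [X in _ + X]big1 => [|B' nB]; last first.
  rewrite !ffunE [B == B']eq_sym (negbTE nB); by rewrite !(mulr0, mul0r).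
rewrite addr0 !ffunE !eqxx !mulr1.
ring.
Qed.

Lemma cle_bs (R : rcfType) (n : nat) (i : 'I_n) : cle R i = bs 1 [set i].
Proof.
apply/ffunP => S; rewrite /cle /clvec !ffunE mul1r.
rewrite (bigD1 i) //= big1 => [|k nk]; last by rewrite mxE (negbTE nk) mulr0.
rewrite addr0 mxE !eqxx mulr1; by rewrite eq_sym.
Qed.

Lemma symdiffC (n : nat) (A B : {set 'I_n}) : symdiff A B = symdiff B A.
Proof. by rewrite /symdiff setUC. Qed.

Lemma bsB (R : rcfType) (n : nat) (a b : R) (D : {set 'I_n}) : bs a D - bs b D = bs (a - b) D.
Proof. by apply/ffunP => S; rewrite !ffunE mulrBl. Qed.

Lemma clcomm_bs (R : rcfType) (n : nat) (a b : R) (A B : {set 'I_n}) :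
  clcomm (bs a A) (bs b B) = bs (a * b * (clsign R A B - clsign R B A)) (symdiff A B).
Proof.
rewrite /clcomm !clmul_bs [symdiff B A]symdiffC bsB; congr bs; ring.
Qed.

Lemma spin_gen_bs (R : rcfType) (n : nat) (i j : 'I_n) :
  spin_gen R i j = bs (clsign R [set i] [set j] - clsign R [set j] [set i]) (symdiff [set i] [set j]).
Proof. by rewrite /spin_gen !cle_bs clcomm_bs !mul1r. Qed.

Lemma piAd_entry (R : rcfType) (n : nat) (i j k l : 'I_n) :
  piAd (spin_gen R i j) k l =
  (clsign R [set i] [set j] - clsign R [set j] [set i]) *
  (clsign R (symdiff [set i] [set j]) [set l] - clsign R [set l] (symdiff [set i] [set j])) *
  (symdiff (symdiff [set i] [set j]) [set l] == [set k])%:R.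
Proof. by rewrite /piAd mxE spin_gen_bs cle_bs clcomm_bs ffunE mulr1. Qed.

Lemma big_set2_ne (T : finType) (i j : T) (F : T -> nat) : i != j ->
  (\sum_(a in [set i; j]) F a = F i + F j)%N.
Proof. move=> ij; rewrite big_setU1 ?inE // big_set1 //. Qed.

Lemma symdiff11 (n : nat) (i j : 'I_n) : i != j -> symdiff [set i] [set j] = [set i; j].
Proof.
move=> ij; apply/setP => x; rewrite /symdiff !inE.
case: (eqVneq x i) => [->|xi]; case: (eqVneq x j) => [xj|xj] //=.
all: by rewrite ?ij // eq_sym ij.
Qed.

Lemma piAd_spin (R : rcfType) (n : nat) (i j : 'I_n) :
  piAd (spin_gen R i j) = 4%:R *: (delta_mx j i - delta_mx i j).
Proof.
apply/matrixP => k l; rewrite piAd_entry !mxE.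
have s11 : forall a b : 'I_n, clsign R [set a] [set b] = (-1) ^+ ((b < a) + (a == b))%N.
  by move=> a b; rewrite clsignE !big_set1.
case: (eqVneq i j) => [<-|ij].
  by rewrite subrr !mul0r subrr mulr0.
rewrite symdiff11 // !clsignE !(big_set1, @big_set2_ne _ i j _ ij).
rewrite (negbTE ij) eq_sym (negbTE ij).
have e11 : forall a b : 'I_n, ([set a] == [set b]) = (a == b).
  by move=> a b; apply/eqP/eqP => [/set1_inj|->].
case: (eqVneq l i) => [->|li].
  have -> : symdiff [set i; j] [set i] = [set j].
    apply/setP => x; rewrite /symdiff !inE.
    case: (eqVneq x i) => [->|xi]; case: (eqVneq x j) => [xj|xj] //=; by rewrite (negbTE ij).
  rewrite e11 [j == i]eq_sym (negbTE ij) ltnn /= [j == k]eq_sym.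
  case: (k == j); case: (ltngtP i j) => h //=; rewrite ?andbF /=; try ring.
  by move: ij; rewrite -val_eqE /= h eqxx.
case: (eqVneq l j) => [->|lj].
  have -> : symdiff [set i; j] [set j] = [set i].
    apply/setP => x; rewrite /symdiff !inE.
    case: (eqVneq x i) => [->|xi]; case: (eqVneq x j) => [xj|xj] //=; by rewrite (negbTE ij).
  rewrite e11 ltnn /= [i == k]eq_sym.
  case: (k == i); case: (ltngtP i j) => h //=; rewrite ?andbF ?andbT /=; try ring.
  by move: ij; rewrite -val_eqE /= h eqxx.
have -> : (symdiff [set i; j] [set l] == [set k]) = false.
  apply/negbTE/negP => /eqP e.
  have hi : i \in symdiff [set i; j] [set l] by rewrite /symdiff !inE eqxx /= eq_sym li.
  have hj : j \in symdiff [set i; j] [set l] by rewrite /symdiff !inE eqxx orbT /= eq_sym lj.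
  rewrite e inE in hi; rewrite e inE in hj.
  by move: ij; rewrite (eqP hi) (eqP hj) eqxx.
by rewrite !andbF mulr0 subrr mulr0.
Qed.

Lemma clmulDl (R : rcfType) (n : nat) (x1 x2 y : Cl R n) :
  clmul (x1 + x2) y = clmul x1 y + clmul x2 y.
Proof.
apply/ffunP => S; rewrite [RHS]ffunE !clmulE -big_split; apply: eq_bigr => A _.
rewrite -big_split; apply: eq_bigr => B _; rewrite ffunE /=; ring.
Qed.

Lemma clmulDr (R : rcfType) (n : nat) (x y1 y2 : Cl R n) :
  clmul x (y1 + y2) = clmul x y1 + clmul x y2.
Proof.
apply/ffunP => S; rewrite [RHS]ffunE !clmulE -big_split; apply: eq_bigr => A _.
rewrite -big_split; apply: eq_bigr => B _; rewrite ffunE /=; ring.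
Qed.

Lemma clmul0l (R : rcfType) (n : nat) (y : Cl R n) : clmul 0 y = 0.
Proof.
apply/ffunP => S; rewrite clmulE [RHS]ffunE; apply: big1 => A _; apply: big1 => B _.
by rewrite ffunE !(mulr0, mul0r).
Qed.

Lemma clmul0r (R : rcfType) (n : nat) (y : Cl R n) : clmul y 0 = 0.
Proof.
apply/ffunP => S; rewrite clmulE [RHS]ffunE; apply: big1 => A _; apply: big1 => B _.
by rewrite ffunE !(mulr0, mul0r).
Qed.

Lemma clmul_suml (R : rcfType) (n : nat) (I : Type) (r : seq I) (F : I -> Cl R n) y :
  clmul (\sum_(i <- r) F i) y = \sum_(i <- r) clmul (F i) y.
Proof.
elim: r => [|a r IH]; first by rewrite !big_nil clmul0l.
by rewrite !big_cons clmulDl IH.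
Qed.

Lemma clmul_sumr (R : rcfType) (n : nat) (I : Type) (r : seq I) (F : I -> Cl R n) y :
  clmul y (\sum_(i <- r) F i) = \sum_(i <- r) clmul y (F i).
Proof.
elim: r => [|a r IH]; first by rewrite !big_nil clmul0r.
by rewrite !big_cons clmulDr IH.
Qed.

Lemma clvec_bs (R : rcfType) (n : nat) (u : 'cV[R]_n) :
  clvec u = \sum_(i < n) bs (u i 0) [set i].
Proof.
apply/ffunP => S; rewrite ffunE sum_ffunE; apply: eq_bigr => i _.
by rewrite ffunE mulrC eq_sym.
Qed.

Lemma clscale_bs (R : rcfType) (n : nat) (c a : R) (D : {set 'I_n}) :
  clscale c (bs a D) = bs (c * a) D.
Proof. by apply/ffunP => S; rewrite !ffunE mulrA. Qed.

Lemma clcomm_vec (R : rcfType) (n : nat) (u v : 'cV[R]_n) :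
  clcomm (clvec u) (clvec v) =
  \sum_(i < n) \sum_(j < n) clscale (u i 0 * v j 0) (spin_gen R i j).
Proof.
rewrite /clcomm !clvec_bs !clmul_suml.
under eq_bigr => i _ do rewrite clmul_sumr.
under [X in _ - X]eq_bigr => i _ do rewrite clmul_sumr.
rewrite [X in _ - X]exchange_big /= -sumrB; apply: eq_bigr => i _.
rewrite -sumrB; apply: eq_bigr => j _.
by rewrite spin_gen_bs clscale_bs !clmul_bs [symdiff [set j] _]symdiffC bsB; congr bs; ring.
Qed.

Local Open Scope complex_scope.
Lemma adjmx_cast (R : rcfType) m n m' n' (em : m = m') (en : n = n') (M : 'M[R[i]]_(m, n)) :
  adjmx (castmx (em, en) M) = castmx (en, em) (adjmx M).
Proof. by case: m' / em; case: n' / en; rewrite !castmx_id. Qed.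

Lemma adjmx_cmx (R : rcfType) m n (M : 'M[R]_(m, n)) : adjmx (cmx M) = cmx M^T.
Proof. by apply/matrixP => a b; rewrite !mxE conjc_real. Qed.

Lemma adjmx_tens1 (R : rcfType) d m n (M : 'M[R]_(m, n)) :
  adjmx ((1%:M : 'M[R[i]]_d) *t cmx M) = (1%:M : 'M[R[i]]_d) *t cmx M^T.
Proof.
rewrite /adjmx trmx_tens (map_mxT conjc) trmx1 map_mx1.
by rewrite -[map_mx conjc (cmx M)^T]/(adjmx (cmx M)) adjmx_cmx.
Qed.

Lemma cmxM (R : rcfType) m n p (A : 'M[R]_(m, n)) (B : 'M[R]_(n, p)) : cmx (A *m B) = cmx A *m cmx B.
Proof.
apply/matrixP => a b; rewrite !mxE.
rewrite (big_morph (fun x : R => x%:C) (id1 := 0) (op1 := +%R)) //; last first.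
  by move=> x y /=; apply/eqP; rewrite eq_complex /= !addr0 !eqxx.
by apply: eq_bigr => k _; rewrite !mxE; apply/eqP; rewrite eq_complex /= !mul0r !mulr0 !subr0 !addr0 !eqxx.
Qed.

Lemma tens_key (R : rcfType) (d n : nat) (A : 'M[R[i]]_d) (B : 'M[R]_n) (u v : 'cV[R]_n) :
  adjmx (tens_vec d u) *m (A *t cmx B) *m tens_vec d v = ((u^T *m B *m v) 0 0)%:C *: A.
Proof.
rewrite /tens_vec adjmx_cast adjmx_tens1.
rewrite -[A *t cmx B](castmx_id (erefl (d * n)%N, erefl (d * n)%N)).
rewrite -castmx_mul -castmx_mul.
rewrite !tensmx_mul mul1mx mulmx1 -!cmxM [u^T *m B *m v]mx11_scalar.
have -> : cmx ((u^T *m B *m v) 0 0)%:M = (((u^T *m B *m v) 0 0)%:C)%:M :> 'M[R[i]]_1.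
  by apply/matrixP => a b; rewrite !mxE; case: (_ == _) => /=; rewrite ?mulr1n ?mulr0n.
by rewrite tens_mx_scalar castmxKV [in RHS]mxE eqxx mulr1n.
Qed.

Lemma in_spin_add (R : rcfType) (n : nat) (a : R) (x y : Cl R n) :
  in_spin x -> in_spin y -> in_spin (clscale a x + y).
Proof.
move=> [c ->] [c' ->]; exists (fun i j => a * c i j + c' i j).
apply/ffunP => S; rewrite ffunE ffunE !sum_ffunE mulr_sumr -big_split; apply: eq_bigr => i _.
rewrite !sum_ffunE mulr_sumr -big_split; apply: eq_bigr => j _.
rewrite !ffunE /=; ring.
Qed.

Lemma in_spin0 (R : rcfType) (n : nat) : in_spin (0 : Cl R n).
Proof.
exists (fun _ _ => 0); apply/ffunP => S; rewrite sum_ffunE ffunE.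
rewrite big1 // => i _; rewrite sum_ffunE big1 // => j _; by rewrite ffunE mul0r.
Qed.

Lemma in_spin_gen (R : rcfType) (n : nat) (i j : 'I_n) : in_spin (spin_gen R i j).
Proof.
exists (fun a b => (a == i)%:R * (b == j)%:R); apply/ffunP => S; rewrite sum_ffunE.
transitivity (\sum_(a < n) (a == i)%:R * \sum_(b < n) (b == j)%:R * spin_gen R a b S); last first.
  apply: eq_bigr => a _; rewrite sum_ffunE mulr_sumr; apply: eq_bigr => b _.
  by rewrite /clscale [in RHS]ffunE mulrA.
by rewrite sum_delta sum_delta.
Qed.

Lemma clscale1 (R : rcfType) (n : nat) (x : Cl R n) : clscale 1 x = x.
Proof. by apply/ffunP => S; rewrite ffunE mul1r. Qed.

Lemma pi0 (R : rcfType) (n d : nat) (pi : Cl R n -> 'M[R[i]]_d) :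
  spin_rep pi -> pi 0 = 0.
Proof.
move=> [Hl _]; have := Hl 1 0 0 (in_spin0 _ _) (in_spin0 _ _).
rewrite clscale1 addr0 scale1r => h.
by apply: (addrI (pi 0)); rewrite addr0 -h.
Qed.

Lemma pi_scale (R : rcfType) (n d : nat) (pi : Cl R n -> 'M[R[i]]_d) a x :
  spin_rep pi -> in_spin x -> pi (clscale a x) = a%:C *: pi x.
Proof.
move=> Hr hx; have := (proj1 Hr) a x 0 hx (in_spin0 _ _).
by rewrite addr0 (@pi0 _ _ _ _ Hr) addr0.
Qed.

Lemma pi_sum (R : rcfType) (n d : nat) (pi : Cl R n -> 'M[R[i]]_d) (I : Type) (r : seq I) (F : I -> Cl R n) :
  spin_rep pi -> (forall i, in_spin (F i)) ->
  in_spin (\sum_(i <- r) F i) /\ pi (\sum_(i <- r) F i) = \sum_(i <- r) pi (F i).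
Proof.
move=> Hr hF; elim: r => [|a r [IH1 IH2]].
  by rewrite !big_nil; split; [exact: in_spin0 | exact: (@pi0 _ _ _ _ Hr)].
rewrite !big_cons; have := (proj1 Hr) 1 (F a) _ (hF a) IH1.
rewrite clscale1 scale1r => ->; split; last by rewrite IH2.
by rewrite -[F a]clscale1; apply: in_spin_add.
Qed.

Lemma spin_gen_swap (R : rcfType) (n : nat) (i j : 'I_n) :
  spin_gen R j i = clscale (-1) (spin_gen R i j).
Proof. by apply/ffunP => S; rewrite /spin_gen /clcomm !ffunE /=; ring. Qed.

Lemma in_spin_scale (R : rcfType) (n : nat) (a : R) (x : Cl R n) :
  in_spin x -> in_spin (clscale a x).
Proof. by move=> hx; rewrite -[clscale a x]addr0; apply: in_spin_add => //; exact: in_spin0. Qed.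

Lemma adjmx_mul (R : rcfType) m p q (A : 'M[R[i]]_(m, p)) (B : 'M[R[i]]_(p, q)) :
  adjmx (A *m B) = adjmx B *m adjmx A.
Proof. by rewrite /adjmx trmx_mul map_mxM. Qed.

Lemma uDv (R : rcfType) n (u v : 'cV[R]_n) a b :
  (u^T *m delta_mx a b *m v) 0 0 = u a 0 * v b 0.
Proof.
rewrite -(mul_delta_mx (0 : 'I_1)) mulmxA -colE -mulmxA -rowE.
by rewrite !mxE big_ord1 !mxE.
Qed.


Lemma uMv (R : rcfType) (n : nat) (i j : 'I_n) (u v : 'cV[R]_n) :
  (u^T *m piAd (spin_gen R i j) *m v) 0 0 = 4%:R * (u j 0 * v i 0 - u i 0 * v j 0).
Proof.
have h : forall (c : R) (M N : 'M[R]_1), (c *: (M - N)) 0 0 = c * (M 0 0 - N 0 0) by move=> c M N; rewrite !mxE.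
by rewrite piAd_spin -scalemxAr -scalemxAl mulmxBr mulmxBl h !uDv.
Qed.

Theorem proposition3p5
  (R : rcfType) (n d : nat) (pi : Cl R n -> 'M[R[i]]_d)
  (Hrep : spin_rep pi) (Hunit : unitary_rep pi) (Hirr : irreducible_rep pi)
  (N : nat) (P : 'I_N.+1 -> 'M[R[i]]_(d * n)) (m : 'I_N.+1 -> R[i])
  (* P k is the orthogonal projection onto V_(lambda_k) *)
  (HPidem : forall k, P k *m P k = P k)
  (HPsa : forall k, adjmx (P k) = P k)
  (HPorth : forall k l, k != l -> P k *m P l = 0)
  (HPsum : \sum_(k < N.+1) P k = 1%:M)
  (* V_(lambda_k) is a submodule of V_rho (x) R^n *)
  (HPinv : forall k X, in_spin X ->
             tens_rep pi X *m P k = P k *m tens_rep pi X *m P k)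
  (* V_(lambda_k) is irreducible *)
  (HPnz : forall k, P k != 0)
  (HPirr : forall k (U : 'M[R[i]]_(d * n)), (U <= (P k)^T)%MS ->
             (forall X, in_spin X -> (U *m (tens_rep pi X)^T <= U)%MS) ->
             (U == (0 : 'M[R[i]]_(d * n)))%MS \/ (U == (P k)^T)%MS)
  (* multiplicity one: distinct constituents are non-isomorphic *)
  (HPmult1 : forall k l, k != l -> forall F : 'M[R[i]]_(d * n),
             F = P l *m F *m P k ->
             (forall X, in_spin X -> tens_rep pi X *m F = F *m tens_rep pi X) ->
             F = 0)
  (* m k = m(lambda_k): the scalar by which C^ acts on V_(lambda_k) *)
  (Hm : forall k, Chat pi *m P k = m k *: P k) :
  forall u v : 'cV[R]_n,
    \sum_(k < N.+1) m k *: (adjmx (clifford_hom (P k) u) *m clifford_hom (P k) v)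
    = - (4%:R)^-1 *: pi (clcomm (clvec u) (clvec v)).
Proof.
move=> u v.
have step1 : \sum_(k < N.+1) m k *: (adjmx (clifford_hom (P k) u) *m clifford_hom (P k) v)
   = adjmx (tens_vec d u) *m Chat pi *m tens_vec d v.
  rewrite -[Chat pi]mulmx1 -HPsum !mulmx_sumr mulmx_suml.
  apply: eq_bigr => k _; rewrite Hm /clifford_hom adjmx_mul HPsa.
  by rewrite -scalemxAr -scalemxAl !mulmxA -[_ *m P k *m P k]mulmxA HPidem.
rewrite step1 /Chat -scalemxAr -scalemxAl mulmx_sumr mulmx_suml.
under eq_bigr => i _ do rewrite mulmx_sumr mulmx_suml.
under eq_bigr => i _ do under eq_bigr => j _ do rewrite tens_key uMv.
have hin : forall i, in_spin (\sum_(j < n) clscale (u i 0 * v j 0) (spin_gen R i j)).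
  move=> i; apply: (proj1 (@pi_sum _ _ _ pi _ _ _ Hrep _)) => j.
  by apply: in_spin_scale; exact: in_spin_gen.
rewrite clcomm_vec (proj2 (@pi_sum _ _ _ pi _ _ _ Hrep hin)).
under [in RHS]eq_bigr => i _ do rewrite (proj2 (@pi_sum _ _ _ pi _ _ _ Hrep (fun j => @in_spin_scale _ _ (u i 0 * v j 0) _ (@in_spin_gen R n i j)))).
under [in RHS]eq_bigr => i _ do under eq_bigr => j _ do rewrite (@pi_scale _ _ _ pi _ _ Hrep (@in_spin_gen R n i j)).
set S1 := (X in _ = _ *: X).
have tm : forall (a b : R) (X : 'M[R[i]]_d), (4%:R * (a - b))%:C *: X = (4%:R : R)%:C *: (a%:C *: X) - (4%:R : R)%:C *: (b%:C *: X).
  by move=> a b X; rewrite rmorphM rmorphB -scalerA scalerBl scalerBr.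
under eq_bigr => i _ do under eq_bigr => j _ do rewrite tm.
under eq_bigr => i _ do rewrite sumrB -!scaler_sumr.
rewrite sumrB -!scaler_sumr.
have h1 : \sum_(i < n) \sum_(j < n) (u j 0 * v i 0)%:C *: pi (spin_gen R i j) = - S1.
  rewrite exchange_big /= /S1 -sumrN; apply: eq_bigr => a _; rewrite -sumrN; apply: eq_bigr => b _.
  by rewrite spin_gen_swap (@pi_scale _ _ _ pi _ _ Hrep (@in_spin_gen R n a b)) rmorphN1 scaleN1r scalerN.
rewrite h1 -/S1 scalerN -opprD -scalerDl scalerN scalerA -scaleNr; congr (_ *: _).
rewrite rmorph_nat; congr (- _).
by field; rewrite ?pnatr_eq0.
Qed.
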